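(* Let $S$ be a finite semigroup. Then $S$ is DSC if and only if $S$ is a group.
   Context: A diagonal subsemigroup of $S\times S$ is a subsemigroup containing $\{(s,s)\colon s\in S\}$; a congruence is a symmetric and transitive diagonal subsemigroup; $S$ is DSC if every diagonal subsemigroup of $S\times S$ is a congruence on $S$. *)

(* Defs.v *)
From mathcomp Require Import all_boot.

Set Implicit Arguments.
Unset Strict Implicit.
Unset Printing Implicit Defensive.

Definition associative_op (T : Type) (op : T -> T -> T) : Prop :=
  forall x y z, op x (op y z) = op (op x y) z.

Definition diagonal_subsemigroup (T : Type) (op : T -> T -> T)
    (rho : T -> T -> Prop) : Prop :=
  (forall s, rho s s) /\
  (forall a b c d, rho a b -> rho c d -> rho (op a c) (op b d)).

Definition congruence (T : Type) (op : T -> T -> T)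
    (rho : T -> T -> Prop) : Prop :=
  diagonal_subsemigroup op rho /\
  (forall a b, rho a b -> rho b a) /\
  (forall a b c, rho a b -> rho b c -> rho a c).

Definition DSC (T : Type) (op : T -> T -> T) : Prop :=
  forall rho : T -> T -> Prop, diagonal_subsemigroup op rho -> congruence op rho.

Definition is_group (T : Type) (op : T -> T -> T) : Prop :=
  exists e : T,
    (forall x, op e x = x /\ op x e = x) /\
    (forall x, exists y, op x y = e /\ op y x = e).

(* Main.v *)
Require Import Defs.
From mathcomp Require Import all_boot.
From mathcomp Require Import zify.
From Stdlib Require Import Lia.
Set Implicit Arguments.
Unset Strict Implicit.

Fixpoint pw (T : Type) (op : T -> T -> T) (x : T) (n : nat) : T :=
  match n with 0 => x | S n => op x (pw op x n) end.

Lemma pw_comm (T : Type) (op : T -> T -> T) (assoc : associative_op op) x n :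
  op (pw op x n) x = op x (pw op x n).
Proof.
elim: n => [|n IH] //=. by rewrite -assoc IH.
Qed.

Lemma pw_add (T : Type) (op : T -> T -> T) (assoc : associative_op op) x m n :
  op (pw op x m) (pw op x n) = pw op x (S (m + n)).
Proof.
elim: m => [|m IH] //=. by rewrite -assoc IH.
Qed.

Lemma pw_shift (T : Type) (op : T -> T -> T) x i j :
  pw op x i = pw op x j -> forall m, pw op x (m + i) = pw op x (m + j).
Proof.
move=> H; elim=> [|m IH] //=; change (op x (pw op x (m+i)) = op x (pw op x (m+j))); by rewrite IH.
Qed.

Lemma pw_idem (T : finType) (op : T -> T -> T) (assoc : associative_op op) (x : T) :
  exists n, op (pw op x n) (pw op x n) = pw op x n.
Proof.
pose f := fun i : 'I_(#|T|.+1) => pw op x i.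
have /injectivePn [i [j ij fij]] : ~~ injectiveb f.
  apply/negP => /injectiveP inj; have := leq_card _ inj.
  by rewrite card_ord ltnn.
rewrite /f in fij.
have [a [d [d1 Had]]] : exists a d, 0 < d /\ pw op x a = pw op x (a + d).
  case: (ltngtP i j) => h.
  - exists i, (j - i); split; first lia. by rewrite fij; congr pw; lia.
  - exists j, (i - j); split; first lia. by rewrite -fij; congr pw; lia.
  - by move: ij; rewrite (val_inj h) eqxx.
have g1 : forall m, pw op x (m + a) = pw op x (m + a + d).
  move=> m; rewrite (pw_shift Had m); congr pw; lia.
have g : forall t m, pw op x (m + a) = pw op x (t * d + m + a).
  elim=> [|t IH] m; first by rewrite mul0n add0n.
  rewrite IH g1; congr pw; lia.
exists (d * a + d - 1).
rewrite (pw_add assoc).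
have := g (a + 1) (d * a + d - 1 - a).
have -> : d * a + d - 1 - a + a = d * a + d - 1 by nia.
move=> ->; congr pw; nia.
Qed.

Lemma pw_iter (T : Type) (op : T -> T -> T) (assoc : associative_op op) x u y :
  x = op u (op x y) -> forall k, x = op (pw op u k) (op x (pw op y k)).
Proof.
move=> H; elim=> [|k IH] //=.
rewrite {1}H {1}IH -(pw_comm assoc y k).
by rewrite !assoc.
Qed.

Section Dir1.
Variables (T : finType) (op : T -> T -> T) (assoc : associative_op op).
Hypothesis Hs : forall a x, exists u v, x = op u (op a v).

Lemma F1 x c : exists w, x = op x (op c w).
Proof.
have [u [v H]] := Hs (op x c) x.
rewrite -assoc in H.
have [k Hk] := pw_idem assoc (op c v).
have Hit := pw_iter assoc H k.
set e := pw op (op c v) k in Hk Hit.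
have Hxe : op x e = x.
  by rewrite {1}Hit -!assoc Hk -Hit.
move: Hxe; rewrite /e; case: k {Hk Hit e} => [|k] /= Hxe.
  by exists v.
by exists (op v (pw op (op c v) k)); rewrite -{1}Hxe !assoc.
Qed.

Lemma F2 x c : exists w, c = op w (op x c).
Proof.
have [u [v H]] := Hs (op x c) c.
have H' : c = op (op u x) (op c v) by rewrite {1}H !assoc.
have [k Hk] := pw_idem assoc (op u x).
have Hit := pw_iter assoc H' k.
set e := pw op (op u x) k in Hk Hit.
have Hxe : op e c = c.
  by rewrite {1}Hit !assoc Hk -!assoc -Hit.
move: Hxe; rewrite /e; case: k {Hk Hit e} => [|k] /= Hxe.
  by exists u; rewrite -{1}Hxe -assoc.
exists (op (pw op (op u x) k) u).
by rewrite -{1}Hxe -(pw_comm assoc) !assoc.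
Qed.

Definition Rrel x y := exists s t, y = op x s /\ x = op y t.
Definition Lrel x y := exists s t, y = op s x /\ x = op t y.

Lemma Rrefl x : Rrel x x.
Proof. have [w Hw] := F1 x x. by exists (op x w), (op x w). Qed.
Lemma Lrefl x : Lrel x x.
Proof. have [w Hw] := F2 x x. by exists (op w x), (op w x); rewrite -assoc. Qed.
Lemma Rsym x y : Rrel x y -> Rrel y x.
Proof. by move=> [s [t [H1 H2]]]; exists t, s. Qed.
Lemma Lsym x y : Lrel x y -> Lrel y x.
Proof. by move=> [s [t [H1 H2]]]; exists t, s. Qed.
Lemma Rtrans x y z : Rrel x y -> Rrel y z -> Rrel x z.
Proof.
move=> [s [t [H1 H2]]] [s' [t' [H3 H4]]].
exists (op s s'), (op t' t); split.
  by rewrite H3 H1 assoc.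
by rewrite H2 H4 assoc.
Qed.
Lemma Ltrans x y z : Lrel x y -> Lrel y z -> Lrel x z.
Proof.
move=> [s [t [H1 H2]]] [s' [t' [H3 H4]]].
exists (op s' s), (op t t'); split.
  by rewrite H3 H1 assoc.
by rewrite H2 H4 assoc.
Qed.
Lemma Rmul a c : Rrel (op a c) a.
Proof.
have [w Hw] := F1 a c. exists w, c; split => //; rewrite -assoc; exact: Hw.
Qed.
Lemma Lmul x c : Lrel (op x c) c.
Proof.
have [w Hw] := F2 x c. exists w, x; split => //.
Qed.
Lemma Lcomp a b c d : Lrel c d -> Lrel (op a c) (op b d).
Proof.
move=> [s [t [H1 H2]]].
have [w Hw] := F2 a c. have [w' Hw'] := F2 b d.
exists (op b (op s w)), (op a (op t w')); split.
  by rewrite {1}H1 {1}Hw !assoc.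
by rewrite {1}H2 {1}Hw' !assoc.
Qed.
Lemma Rcomp a b c d : Rrel a b -> Rrel (op a c) (op b d).
Proof.
move=> [s [t [H1 H2]]].
have [w Hw] := F1 a c. have [w' Hw'] := F1 b d.
exists (op w (op s d)), (op w' (op t c)); split.
  by rewrite {1}H1 {1}Hw !assoc.
by rewrite {1}H2 {1}Hw' !assoc.
Qed.

Hypothesis Hdsc : DSC op.

Lemma LR x y : Lrel x y -> Rrel x y.
Proof.
move=> Hxy.
pose rho a b := Lrel a b /\ (Rrel a b \/ (Rrel a x /\ Rrel b y)).
have Hd : diagonal_subsemigroup op rho.
  split.
    by move=> s; split; [apply: Lrefl | left; apply: Rrefl].
  move=> a b c d [Hab Hab'] [Hcd _]; split; first exact: Lcomp.
  case: Hab' => [Hab'|[Hax Hby]].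
    left; apply: Rtrans (Rmul a c) _; apply: Rtrans Hab' _.
    exact: Rsym (Rmul b d).
  right; split; [exact: Rtrans (Rmul a c) Hax | exact: Rtrans (Rmul b d) Hby].
have [_ [Hsym _]] := Hdsc Hd.
have [_ [H|[H _]]] := Hsym x y (conj Hxy (or_intror (conj (Rrefl x) (Rrefl y)))).
  exact: Rsym.
exact: Rsym.
Qed.

Lemma RL x y : Rrel x y -> Lrel x y.
Proof.
move=> Hxy.
pose rho a b := Rrel a b /\ (Lrel a b \/ (Lrel a x /\ Lrel b y)).
have Hd : diagonal_subsemigroup op rho.
  split.
    by move=> s; split; [apply: Rrefl | left; apply: Lrefl].
  move=> a b c d [Hab _] [Hcd Hcd']; split; first exact: Rcomp.
  case: Hcd' => [Hcd'|[Hcx Hdy]].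
    left; apply: Ltrans (Lmul a c) _; apply: Ltrans Hcd' _.
    exact: Lsym (Lmul b d).
  right; split; [exact: Ltrans (Lmul a c) Hcx | exact: Ltrans (Lmul b d) Hdy].
have [_ [Hsym _]] := Hdsc Hd.
have [_ [H|[H _]]] := Hsym x y (conj Hxy (or_intror (conj (Lrefl x) (Lrefl y)))).
  exact: Lsym.
exact: Lsym.
Qed.

Lemma allR x c : Rrel x c.
Proof.
apply: Rtrans (Rsym (Rmul x c)) _.
apply: Rsym; apply: LR; apply: Lsym; exact: Lmul.
Qed.

Lemma allL x c : Lrel x c.
Proof.
apply: Ltrans _ (Lmul x c).
apply: RL; apply: Rsym; exact: Rmul.
Qed.

End Dir1.

Lemma simple_of_DSC (T : finType) (op : T -> T -> T) (assoc : associative_op op) :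
  DSC op -> forall a x, exists u v, x = op u (op a v).
Proof.
move=> H a x.
pose rho p q := p = q \/ exists u v, q = op u (op a v).
have Hd : diagonal_subsemigroup op rho.
  split; first by move=> s; left.
  move=> a1 b1 c1 d1 [->|[u [v ->]]] [->|[u' [v' ->]]].
  - by left.
  - by right; exists (op b1 u'), v'; rewrite !assoc.
  - by right; exists u, (op v d1); rewrite !assoc.
  - by right; exists u, (op v (op u' (op a v'))); rewrite !assoc.
have [_ [Hsym _]] := H rho Hd.
have := Hsym x (op a (op a a)) (or_intror (ex_intro _ a (ex_intro _ a erefl))).
case=> [<-|//]. by exists a, a.
Qed.

Lemma group_of_DSC (T : finType) (op : T -> T -> T) (assoc : associative_op op)
  (nonempty : inhabited T) : DSC op -> is_group op.
Proof.
move=> H.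
have Hs := simple_of_DSC assoc H.
have aR := allR assoc Hs H.
have aL := allL assoc Hs H.
case: nonempty => a.
have [e [t0 [He _]]] := aR a a.
have [f [t1 [Hf _]]] := aL a a.
have eR : forall y, op y e = y.
  move=> y; have [s [t [Hy _]]] := aL a y.
  by rewrite Hy -assoc -He.
have fL : forall y, op f y = y.
  move=> y; have [s [t [Hy _]]] := aR a y.
  by rewrite Hy assoc -Hf.
have ef : e = f by rewrite -{1}(fL e) eR.
exists e; split.
  by move=> x; split; [rewrite ef fL | rewrite eR].
move=> x.
have [y [t [Hy _]]] := aR x e.
have [z [t' [Hz _]]] := aL x e.
have yz : y = z.
  by rewrite -(eR z) Hy assoc -Hz ef fL.
by exists y; split; [rewrite -Hy | rewrite yz -Hz].
Qed.

Lemma DSC_of_group (T : finType) (op : T -> T -> T) (assoc : associative_op op) :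
  is_group op -> DSC op.
Proof.
move=> [e [He Hinv]] rho [Hrefl Hmul].
have eL : forall x, op e x = x by move=> x; case: (He x).
have eR : forall x, op x e = x by move=> x; case: (He x).
have Hpw : forall c k, rho e c -> rho e (pw op c k).
  move=> c k Hc; elim: k => [|k IH] //=.
  by rewrite -(eL e); apply: Hmul.
have Hinvrho : forall c c', op c c' = e -> op c' c = e -> rho e c -> rho e c'.
  move=> c c' H1 H2 Hc.
  have [k Hk] := pw_idem assoc c.
  have [P' [_ HP']] := Hinv (pw op c k).
  have Pe : pw op c k = e.
    by rewrite -(eL (pw op c k)) -HP' -assoc Hk.
  move: Pe; case: k {Hk HP' P'} => [|k] /= Pe.
    by have -> : c' = e by rewrite -(eR c') -{1}Pe H2.
  have -> : c' = pw op c k by rewrite -(eR c') -Pe assoc H2 eL.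
  exact: Hpw.
have Hsym : forall a b, rho a b -> rho b a.
  move=> a b Hab.
  have [a' [Ha1 Ha2]] := Hinv a.
  have H1 : rho e (op b a') by rewrite -Ha1; apply: Hmul => //.
  have [g' [Hg1 Hg2]] := Hinv (op b a').
  have H2 := Hinvrho _ _ Hg1 Hg2 H1.
  have := Hmul _ _ _ _ H2 (Hrefl b).
  have -> : op g' b = a.
    by rewrite -(eR b) -Ha2 !assoc -(assoc g') Hg2 eL.
  by rewrite eL.
split; first by split.
split; first exact: Hsym.
move=> a b c Hab Hbc.
have [a' [Ha1 Ha2]] := Hinv a.
have [b' [Hb1 Hb2]] := Hinv b.
have H1 : rho e (op b a') by rewrite -Ha1; apply: Hmul => //.
have H2 : rho e (op c b') by rewrite -Hb1; apply: Hmul => //.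
have := Hmul _ _ _ _ (Hmul _ _ _ _ H2 H1) (Hrefl a).
have -> : op (op (op c b') (op b a')) a = c.
  by rewrite -!assoc Ha2 eR Hb2 eR.
by rewrite !eL.
Qed.

Theorem mainTheorem7 (T : finType) (op : T -> T -> T)
    (assoc : associative_op op) (nonempty : inhabited T) :
  DSC op <-> is_group op.
Proof.
split; [exact: group_of_DSC | exact: DSC_of_group].
Qed.
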